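(* For every positive integer $k$, there exist a finite simple undirected graph $G$ and an orientation $\vec{G}$ of $G$ such that $k\geq \operatorname{adim}(G)\geq\operatorname{bdim}(G)$ and $\operatorname{adim}(\vec{G})\geq\operatorname{bdim}(\vec{G})\geq 2^k$.
   Context: An orientation of $G$ is a directed graph obtained by assigning a direction to each edge of $G$. In an undirected graph, $d(u,v)$ is the shortest-path distance; in a directed graph, $d(u,v)$ is the length of a shortest directed path from $u$ to $v$; in both cases $d(u,v)=\infty$ if no such path exists. For a nonnegative integer $k$, $d_k(u,v)=\min(d(u,v),k+1)$. A function $f:V\to\mathbb{Z}_{\geq 0}$ is a resolving broadcast if for any distinct vertices $x,y$ there is $z$ with $f(z)>0$ and $d_{f(z)}(z,x)\neq d_{f(z)}(z,y)$. The broadcast dimension $\operatorname{bdim}$ is the minimum of $\sum_v f(v)$ over resolving broadcasts $f$. A set $A$ of vertices is an adjacency resolving set if for any distinct $x,y$ there is $z\in A$ with $d_1(z,x)\neq d_1(z,y)$; the adjacency dimension $\operatorname{adim}$ is the minimum cardinality of such a set. *)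

(* Defs.v *)
From mathcomp Require Import all_boot.
Set Implicit Arguments. Unset Strict Implicit. Unset Printing Implicit Defensive.

(* A (di)graph on a finite vertex type T is given by an adjacency relation r:
   r u v means there is an edge (arc) from u to v. *)

Definition simple_graph (T : finType) (e : rel T) : Prop :=
  symmetric e /\ irreflexive e.

Definition orientation (T : finType) (e o : rel T) : Prop :=
  (forall u v, o u v -> e u v) /\
  (forall u v, e u v -> (o u v && ~~ o v u) || (o v u && ~~ o u v)).

Fixpoint within (T : finType) (r : rel T) (n : nat) (u : T) : {set T} :=
  match n with
  | 0 => [set u]
  | m.+1 => within r m u :|: [set y | [exists x in within r m u, r x y]]
  end.

(* d(u,v): Some n = length of a shortest (directed) path, None = infinity.
   Shortest paths have length < #|T|, so searching 0..#|T|-1 suffices. *)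
Definition dist (T : finType) (r : rel T) (u v : T) : option nat :=
  let n := find (fun m => v \in within r m u) (iota 0 #|T|) in
  if n < #|T| then Some n else None.

Definition dtrunc (T : finType) (r : rel T) (k : nat) (u v : T) : nat :=
  match dist r u v with
  | Some d => minn d k.+1
  | None => k.+1
  end.

Definition resolving_broadcast (T : finType) (r : rel T) (f : T -> nat) : Prop :=
  forall x y : T, x != y ->
    exists z : T, 0 < f z /\ dtrunc r (f z) z x != dtrunc r (f z) z y.

Definition is_bdim (T : finType) (r : rel T) (b : nat) : Prop :=
  (exists f : T -> nat, resolving_broadcast r f /\ \sum_(v : T) f v = b) /\
  (forall f : T -> nat, resolving_broadcast r f -> b <= \sum_(v : T) f v).

Definition adjacency_resolving (T : finType) (r : rel T) (A : {set T}) : Prop :=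
  forall x y : T, x != y ->
    exists2 z, z \in A & dtrunc r 1 z x != dtrunc r 1 z y.

Definition is_adim (T : finType) (r : rel T) (a : nat) : Prop :=
  (exists A : {set T}, adjacency_resolving r A /\ #|A| = a) /\
  (forall A : {set T}, adjacency_resolving r A -> a <= #|A|).

(* Main.v *)
Require Import Defs.
From mathcomp Require Import all_boot.
From Stdlib Require Import Classical.
Set Implicit Arguments. Unset Strict Implicit. Unset Printing Implicit Defensive.

Lemma ex_min (P : nat -> Prop) : (exists n, P n) -> exists n, P n /\ forall m, P m -> n <= m.
Proof.
case=> n Pn.
elim: n {-2}n (leqnn n) Pn => [|N IH] n hn Pn.
  exists n; split => // m _; by move: hn; rewrite leqn0 => /eqP->.
case: (classic (exists m, m < n /\ P m)) => [[m [hm Pm]]|H].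
  apply: (IH m) => //; by rewrite -ltnS (leq_trans hm hn).
exists n; split => // m Pm; rewrite leqNgt; apply/negP => hm; apply: H; by exists m.
Qed.

Lemma dtrunc1 (T : finType) (r : rel T) (z x : T) :
  dtrunc r 1 z x = if x == z then 0 else if r z x then 1 else 2.
Proof.
rewrite /dtrunc /dist.
have w0 : x \in within r 0 z = (x == z) by rewrite /= inE.
have w1 : x \in within r 1 z = (x == z) || r z x.
  rewrite /= !inE; congr (_ || _); apply/existsP/idP => [[y /andP[]]|].
    by rewrite inE => /eqP->.
  by move=> h; exists z; rewrite inE eqxx.
have cT : 0 < #|T| by apply/card_gt0P; exists z.
case: eqP => [->|nxz].
  move: cT; case: #|T| => // N _ /=; by rewrite inE eqxx.
have cT2 : 1 < #|T|.
  rewrite (@leq_trans #|[set x; z]|) //; last exact: max_card.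
  by rewrite cards2; case: eqP.
move: cT2; case: #|T| => [|[|N]] // _.
rewrite /= w0 w1; move/eqP: nxz => /negbTE -> /=.
case: (r z x) => //=.
case: ifP => // _; by rewrite minnC minnE subKn.
Qed.

Lemma adim_ex (T : finType) (r : rel T) : exists a, is_adim r a.
Proof.
case: (@ex_min (fun a => exists A, adjacency_resolving r A /\ #|A| = a)) => [|a [[A [HA HAa]] Hmin]].
  exists #|[set: T]|; exists [set: T]; split => // x y nxy.
  exists x; first by rewrite inE.
  by rewrite /= !dtrunc1 eqxx (eq_sym y x) (negbTE nxy); case: (r x y).
exists a; split; first by exists A.
by move=> B HB; apply: Hmin; exists B.
Qed.

Lemma bdim_ex (T : finType) (r : rel T) : exists b, is_bdim r b.
Proof.
case: (@ex_min (fun b => exists f, resolving_broadcast r f /\ \sum_(v : T) f v = b)) => [|b [[f [Hf Hfb]] Hmin]].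
  exists (\sum_(v : T) 1); exists (fun _ => 1); split => // x y nxy.
  exists x; split => //.
  by rewrite /= !dtrunc1 eqxx (eq_sym y x) (negbTE nxy); case: (r x y).
exists b; split; first by exists f.
by move=> g Hg; apply: Hmin; exists g.
Qed.

Lemma bdim_le_adim (T : finType) (r : rel T) a b : is_adim r a -> is_bdim r b -> b <= a.
Proof.
move=> [[A [HA <-]] _] [_ Hb].
have -> : #|A| = \sum_(v : T) nat_of_bool (v \in A).
  rewrite -sum1_card big_mkcond; apply: eq_bigr => v _; by case: (v \in A).
apply: Hb => x y nxy.
have [z zA Hz] := HA x y nxy.
by exists z; rewrite zA.
Qed.

Lemma twin_dist (T : finType) (r : rel T) (x y z : T) :
  z != x -> z != y -> (forall w, w != x -> w != y -> r w x = r w y) ->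
  dist r z x = dist r z y.
Proof.
move=> zx zy H.
have E : forall n, (x \in within r n z) = (y \in within r n z).
  elim => [|n IH] /=; first by rewrite !inE !(eq_sym _ z) (negbTE zx) (negbTE zy).
  rewrite !inE IH; case yW: (y \in within r n z) => //=.
  move: IH; rewrite yW => xW.
  have nW : forall w, w \in within r n z -> (w != x) && (w != y).
    move=> w wW; apply/andP; split; apply/eqP => ew; subst w.
      by rewrite wW in xW.
    by rewrite wW in yW.
  apply/existsP/existsP => -[w /andP[wW rw]]; exists w; rewrite wW /=;
    have /andP[w1 w2] := nW w wW.
    by rewrite -H.
  by rewrite H.
rewrite /dist.
by rewrite (eq_find (a2 := fun m => y \in within r m z)) // => m; rewrite E.
Qed.

Section Constr.
Variable k' : nat.
Local Notation n := k'.+1.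
Definition V := ('I_n + {set 'I_n})%type.

Definition clS (S : {set 'I_n}) : 'I_n :=
  odflt ord0 [pick j in S | (j != ord0) && (ord0 \in S) && [forall i in S, (i != ord0) ==> (j <= i)]].

Lemma clS_spec (S : {set 'I_n}) : (clS S != ord0) = (ord0 \in S) && [exists j in S, j != ord0].
Proof.
rewrite /clS; case: pickP => [j /andP[jS /andP[/andP[j0 S0] _]]|none] /=.
  rewrite j0 S0 /=; apply/esym/existsP; exists j; by rewrite jS.
apply/esym/negP => /andP[S0 /existsP[j /andP[jS j0]]].
pose P := fun i : 'I_n => (i \in S) && (i != ord0).
have Pj : P j by rewrite /P jS.
case: (arg_minnP (fun i : 'I_n => nat_of_ord i) Pj) => m /andP[mS m0] Hm.
move: (none m); rewrite mS m0 S0 /=.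
move/negbT/negP; apply; apply/forallP => i; apply/implyP => iS; apply/implyP => i0.
by apply: Hm; rewrite /P iS.
Qed.

Lemma clS_in (S : {set 'I_n}) : clS S != ord0 -> clS S \in S.
Proof.
rewrite /clS; case: pickP => [j /andP[jS _]|] //= _; by rewrite ?eqxx.
Qed.

Lemma clS_min (S : {set 'I_n}) (j : 'I_n) : ord0 \in S -> j \in S -> j != ord0 -> clS S <= j.
Proof.
move=> S0 jS j0.
have : clS S != ord0 by rewrite clS_spec S0; apply/existsP; exists j; rewrite jS.
rewrite /clS; case: pickP => [m /andP[mS /andP[_ /forallP H]]|] /=; last by move=> _; rewrite ?eqxx.
by move=> _; move: (H j); rewrite jS j0.
Qed.

Lemma clS1 : clS [set ord0] = ord0.
Proof.
apply/eqP; apply/negPn; rewrite clS_spec; apply/negP => /andP[_ /existsP[j /andP[]]].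
by rewrite inE => ->.
Qed.

Definition cl (v : V) : 'I_n := match v with inl j => j | inr X => clS X end.
Definition isc (v : V) : bool := match v with inl j => j != ord0 | inr X => X == [set ord0] end.
Definition rk (v : V) : nat := (cl v).*2 + ~~ isc v.

Definition o (w v : V) : bool :=
  match w with
  | inl i => if i == ord0 then cl v != ord0 else (cl v == i) && (v != w)
  | inr X => if X == [set ord0] then (cl v == ord0) && (v != w)
             else (cl v \in X) && (cl w < cl v)
  end.
Definition e (u v : V) : bool := o u v || o v u.

Lemma o_irr v : o v v = false.
Proof.
case: v => [i|X] /=.
  case: ifP => [/eqP->|_]; first by rewrite eqxx.
  by rewrite !eqxx ?andbF.
case: ifP => _; first by rewrite !eqxx ?andbF.
by rewrite ltnn andbF.
Qed.

Lemma o_rk w v : o w v -> rk w < rk v.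
Proof.
rewrite /rk; case: w => [i|X] /=.
  case: ifP => [/eqP-> c0|i0 /andP[/eqP ci nvw]].
    apply: (leq_trans _ (leq_addr _ _)); case: (cl v) c0 => [[|m] hm] //.
  rewrite ci ltn_add2l; case: v ci nvw => [j|Y] /=.
    by move=> ->; rewrite eqxx.
  move=> cY _; case: eqP => // eY; move: cY i0; rewrite eY clS1 => <-; by rewrite eqxx.
case: ifP => [/eqP-> /andP[/eqP c0 nvw]|_ /andP[_ lt]].
  rewrite clS1 c0 /=; case: v c0 nvw => [j|Y] /=.
    by move=> ->; rewrite eqxx.
  move=> _; case: (eqVneq Y [set ord0]) => [->|nY]; by rewrite ?eqxx ?nY.
apply: (@leq_trans ((clS X).*2 + 2)); first by rewrite ltn_add2l.
apply: leq_trans (leq_addr _ _); by rewrite addn2 -doubleS leq_double.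
Qed.

Lemma o_antisym u v : o u v -> ~~ o v u.
Proof.
move=> h; apply/negP => h'; have := ltn_trans (o_rk h) (o_rk h'); by rewrite ltnn.
Qed.

Lemma o_twin x y w : cl x = cl y -> w != x -> w != y -> o w x = o w y.
Proof.
move=> cxy wx wy; case: w wx wy => [i|X] wx wy /=; rewrite cxy.
  by rewrite !(eq_sym _ (inl i)) wx wy.
by rewrite !(eq_sym _ (inr X)) wx wy.
Qed.

Lemma e_inl_inr (j : 'I_n) (X : {set 'I_n}) : o (inl j) (inr X) || o (inr X) (inl j) = (j \in X).
Proof.
rewrite /=; case: (eqVneq j ord0) => [->|j0].
  case: (eqVneq X [set ord0]) => [->|S1].
    by rewrite clS1 eqxx inE eqxx.
  rewrite ltn0 andbF orbF clS_spec; apply/andP/idP => [[]//|S0]; split => //.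
  case E: [exists j0 in X, j0 != ord0] => //; move/negbT/existsPn: E => H; suff : X = [set ord0] by move/eqP: S1. apply/setP => i.
  rewrite inE; apply/idP/eqP => [iS|->//]; move: (H i); by rewrite iS /= negbK => /eqP.
rewrite /=.
case: (eqVneq X [set ord0]) => [->|S1].
  by rewrite clS1 (eq_sym ord0) (negbTE j0) inE (negbTE j0).
rewrite ?(negbTE S1) andbT /=.
apply/idP/idP => [/orP[/eqP cj|/andP[]//]|jS].
  by rewrite -cj clS_in // cj.
rewrite jS /= -leq_eqVlt.
case S0: (ord0 \in X); first exact: clS_min.
have -> : clS X = ord0 by apply/eqP/negPn; rewrite clS_spec S0.
by [].
Qed.


Lemma e_res : adjacency_resolving e [set inl j | j : 'I_n].
Proof.
have E : forall (j : 'I_n) (X : {set 'I_n}), dtrunc e 1 (inl j) (inr X) = if j \in X then 1 else 2.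
  by move=> j X; rewrite dtrunc1 /e e_inl_inr.
move=> x y nxy.
case: x nxy => [i|X] nxy.
  exists (inl i); first by apply/imsetP; exists i.
  by rewrite !dtrunc1 eqxx (eq_sym y) (negbTE nxy); case: (e _ _).
case: y nxy => [i|Y] nxy.
  exists (inl i); first by apply/imsetP; exists i.
  by rewrite E dtrunc1 eqxx; case: (i \in X).
have [j hj] : exists j, (j \in X) != (j \in Y).
  case E2: [exists j, (j \in X) != (j \in Y)]; first by move/existsP: E2.
  move/negbT/existsPn: E2 => H; move: nxy; suff -> : X = Y by rewrite eqxx.
  by apply/setP => i; move: (H i); rewrite negbK => /eqP.
exists (inl j); first by apply/imsetP; exists j.
rewrite !E; move: hj; by case: (j \in X); case: (j \in Y).
Qed.

Lemma o_lower (f : V -> nat) : resolving_broadcast o f -> 2 ^ n <= \sum_(v : V) f v.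
Proof.
move=> Hf.
pose Z := [set v : V | f v == 0].
have inj : {in Z &, injective cl}.
  move=> x y; rewrite !inE => /eqP fx /eqP fy cxy; apply/eqP/negPn/negP => nxy.
  have [z [fz]] := Hf x y nxy.
  have zx : z != x by apply/eqP => ezx; move: fz; rewrite ezx fx.
  have zy : z != y by apply/eqP => ezy; move: fz; rewrite ezy fy.
  rewrite /dtrunc (twin_dist zx zy) ?eqxx // => w wx wy; exact: o_twin.
have cZ : #|Z| <= n.
  rewrite -(card_in_imset inj); apply: leq_trans (max_card _) _; by rewrite card_ord.
have cV : #|{: V}| = n + 2 ^ n.
  rewrite /V card_sum card_ord; congr (_ + _).
  transitivity #|powerset [set: 'I_n]|; last by rewrite card_powerset cardsT card_ord.
  apply: eq_card => B.
  by rewrite powersetE subsetT.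
have : #|~: Z| <= \sum_(v : V) f v.
  rewrite -sum1_card big_mkcond; apply: leq_sum => v _.
  by rewrite !inE; case: (f v).
apply: leq_trans.
have := cardsC Z; rewrite cV => h.
by rewrite -(leq_add2l n) -h leq_add2r.
Qed.

End Constr.

Unset Implicit Arguments.

Theorem theorem5p3 (k : nat) (hk : 0 < k) :
  exists (T : finType) (e o : rel T),
    simple_graph e /\ orientation e o /\
    exists aG bG aD bD : nat,
      is_adim e aG /\ is_bdim e bG /\ is_adim o aD /\ is_bdim o bD /\
      k >= aG /\ aG >= bG /\ aD >= bD /\ bD >= 2 ^ k.
Proof.
case: k hk => // k' _.
exists (V k'), (@e k'), (@o k').
split.
  split; first by move=> u v; rewrite /e orbC.
  by move=> v; rewrite /e o_irr.
split.
  split; first by move=> u v h; rewrite /e h.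
  move=> u v /orP[h|h]; first by rewrite h (o_antisym h).
  by rewrite h (o_antisym h) orbT.
have [aG HaG] := adim_ex (@e k').
have [bG HbG] := bdim_ex (@e k').
have [aD HaD] := adim_ex (@o k').
have [bD HbD] := bdim_ex (@o k').
exists aG, bG, aD, bD; do 4!split => //.
split.
  case: HaG => _ H; apply: leq_trans (H _ (@e_res k')) _.
  by rewrite card_imset ?cardsT ?card_ord //; move=> ? ? [].
split; first exact: bdim_le_adim HaG HbG.
split; first exact: bdim_le_adim HaD HbD.
by case: HbD => [[f [Hf <-]] _]; exact: o_lower.
Qed.
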